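(* Let $n\ge1$, $\mathbf{k}=(k_1,\dots,k_n)$ positive integers, $N=n+|\mathbf{k}|$, and $D\in\mathcal{D}_{\mathbf{k}}$. Then the sequence $\sigma(D)$ of indices written by the Walking Algorithm on $(T(D),R(D))$ has length $N$.
   Context: $|\mathbf{k}|=k_1+\cdots+k_n$. $\mathcal{D}_{\mathbf{k}}$: sequences $(a_1,\dots,a_N)$ whose positive entries are $k_1,\dots,k_n$ in order, other entries $-1$, all partial sums $a_1+\cdots+a_{i-1}\ge0$. SW-word: $S^{k_j}$ for up step $k_j$, $W$ for $-1$. Filling Algorithm producing $T(D)$: $n$ columns, column $i$ with $k_i+1$ cells in rows $1,\dots,k_i+1$; place $1$ at top of column 1; having placed $1,\dots,i-1$, the lowest filled entry of column $j$ is active if not in row $k_j+1$; if the $i$-th letter is $W$ place $i$ below the smallest active entry, otherwise at the top of the leftmost empty column; continue until $1,\dots,N$ placed. Entries of $T(D)$ are indices. Ranking Algorithm producing $R(D)$: ranks $0,\dots,k_1$ to column-1 indices top to bottom; for $i=2,\dots,n$, if the top index of column $i$ is $A+1$ and index $A$ has rank $a$, column $i$ gets ranks $a,\dots,a+k_i$ top to bottom. Among boxes of equal rank, the largest is the one with largest index. Walking Algorithm: go to the largest rank-$0$ box, mark it, write its index. Repeat: if the current box is in row 1 of column $i$, let $r$ be the rank of the bottom box (row $k_i+1$) of column $i$; otherwise let $r$ be the rank of the box directly above. If an unmarked box of rank $r$ exists, go to the unmarked rank-$r$ box with largest index, mark it and write its index; otherwise stop. $\sigma(D)$ is the sequence of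 written indices. *)

(* Defs.v *)
From mathcomp Require Import all_boot all_order all_algebra.
Set Implicit Arguments. Unset Strict Implicit. Unset Printing Implicit Defensive.
Import GRing.Theory Num.Theory.

(* The set D_k.  A sequence a = (a_1,...,a_N) (stored 0-based as a seq  *)
(* int) whose positive entries are k_1,...,k_n in order, whose other   *)
(* entries are -1, and all of whose partial sums a_1+...+a_{i-1}       *)
(* (i = 1..N) are >= 0.                                                *)
Definition in_Dk (k : seq nat) (a : seq int) : Prop :=
  [/\ [seq x <- a | (0 < x)%R] = [seq (Posz j) | j <- k],
      all (fun x : int => (0 < x)%R || (x == (-1)%R)) a &
      forall i, i < size a -> (0 <= \sum_(j < i) a`_j)%R].

(* i-th letter (1-based) of the SW-word is W iff a_i = -1. *)
Definition letterW (a : seq int) (i : nat) : bool := nth 0%R a i.-1 == (-1)%R.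

(* Filling Algorithm.  The tableau is a list of n columns; column j    *)
(* (0-based) is the list of its indices from top (row 1) to bottom;    *)
(* it has k_j + 1 cells.                                               *)
Definition colcap (k : seq nat) (j : nat) : nat := (nth 0 k j).+1.
Definition lowest (c : seq nat) : nat := last 0 c.

Definition is_active (k : seq nat) (cols : seq (seq nat)) (j : nat) : bool :=
  (0 < size (nth [::] cols j)) && (size (nth [::] cols j) != colcap k j).

(* place index i below the smallest active entry *)
Definition place_W (k : seq nat) (cols : seq (seq nat)) (i : nat) :=
  match [seq j <- iota 0 (size k) | is_active k cols j] with
  | [::] => cols
  | j0 :: js =>
      let j := foldl (fun b j => if lowest (nth [::] cols j) < lowest (nth [::] cols b)
                                 then j else b) j0 js in
      set_nth [::] cols j (rcons (nth [::] cols j) i)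
  end.

Definition place_S (cols : seq (seq nat)) (i : nat) :=
  let j := find (fun c => c == [::]) cols in
  if j < size cols then set_nth [::] cols j [:: i] else cols.

Definition fill_step (k : seq nat) (a : seq int) (cols : seq (seq nat)) (i : nat) :=
  if letterW a i then place_W k cols i else place_S cols i.

Definition fillT (k : seq nat) (a : seq int) : seq (seq nat) :=
  foldl (fill_step k a) (set_nth [::] (nseq (size k) [::]) 0 [:: 1])
        (iota 2 (size a).-1).

(* Ranking Algorithm.  rankf cols m gives the ranks of the indices in  *)
(* the first m columns.                                                *)
Fixpoint rankf (cols : seq (seq nat)) (m : nat) : nat -> nat :=
  match m with
  | 0 => fun _ => 0
  | m'.+1 =>
      let r := rankf cols m' in
      let c := nth [::] cols m' in
      let b := if m' == 0 then 0 else r (head 0 c).-1 in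
      fun x => if x \in c then b + index x c else r x
  end.

Definition rankR (cols : seq (seq nat)) : nat -> nat := rankf cols (size cols).

(* indices.                                                            *)
Definition colof (cols : seq (seq nat)) (x : nat) : nat := find (fun c => x \in c) cols.

Definition next_rank (k : seq nat) (cols : seq (seq nat)) (x : nat) : nat :=
  let j := colof cols x in
  let c := nth [::] cols j in
  let ix := index x c in
  if ix == 0 then rankR cols (nth 0 c (nth 0 k j))  (* bottom box, row k_j+1 *)
  else rankR cols (nth 0 c ix.-1).                  (* box directly above *)

Definition pick_box (cols : seq (seq nat)) (r : nat) (marked : seq nat) : option nat :=
  match [seq y <- flatten cols | (rankR cols y == r) && (y \notin marked)] with
  | [::] => None
  | c => Some (foldr maxn 0 c)
  end.

Fixpoint walk (k : seq nat) (cols : seq (seq nat)) (fuel x : nat) (acc : seq nat) :=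
  match fuel with
  | 0 => acc
  | f.+1 =>
      match pick_box cols (next_rank k cols x) acc with
      | None => acc
      | Some y => walk k cols f y (rcons acc y)
      end
  end.

(* sigma on a tableau/ranking; fuel = number of boxes suffices since   *)
(* each step marks a new box *)
Definition walking (k : seq nat) (cols : seq (seq nat)) : seq nat :=
  match pick_box cols 0 [::] with
  | None => [::]
  | Some x0 => walk k cols (size (flatten cols)) x0 [:: x0]
  end.

Definition sigmaD (k : seq nat) (a : seq int) : seq nat := walking k (fillT k a).

(* Main.v *)
Require Import Defs.
From mathcomp Require Import all_boot all_order all_algebra.
From mathcomp Require Import zify.
Set Implicit Arguments. Unset Strict Implicit. Unset Printing Implicit Defensive.

Section AbsWalk.
Variables (F : seq nat) (rk nr : nat -> nat).

Definition gpick (r : nat) (m : seq nat) : option nat :=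
  match [seq y <- F | (rk y == r) && (y \notin m)] with
  | [::] => None
  | c => Some (foldr maxn 0 c)
  end.

Fixpoint gwalk (fuel x : nat) (acc : seq nat) :=
  match fuel with
  | 0 => acc
  | f.+1 =>
      match gpick (nr x) acc with
      | None => acc
      | Some y => gwalk f y (rcons acc y)
      end
  end.

Lemma foldr_maxn_mem (c : seq nat) : c != [::] -> foldr maxn 0 c \in c.
Proof.
elim: c => // x c IH _ /=; case: c IH => [|y c] IH /=.
  by rewrite maxn0 mem_seq1.
rewrite in_cons /maxn; case: ifP => _; last by rewrite eqxx.
by rewrite IH ?orbT.
Qed.

Lemma foldr_maxn_ub (c : seq nat) z : z \in c -> z <= foldr maxn 0 c.
Proof.
elim: c => // x c IH; rewrite in_cons => /orP[/eqP->|/IH h] /=.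
  exact: leq_maxl.
exact: leq_trans h (leq_maxr _ _).
Qed.

Lemma gpick_some r m y : gpick r m = Some y ->
  [/\ y \in F, rk y = r, y \notin m &
      forall z, z \in F -> rk z = r -> z \notin m -> z <= y].
Proof.
rewrite /gpick; set c := [seq _ <- _ | _].
have: forall z, (z \in c) = (z \in F) && ((rk z == r) && (z \notin m)).
  by move=> z; rewrite mem_filter andbC.
case E: c => [|x c'] // Hc [<-].
have /(_ isT) := @foldr_maxn_mem (x :: c').
rewrite Hc => /and3P[H1 /eqP H2 H3]; split=> // z Fz rz mz.
by apply: (@foldr_maxn_ub (x :: c')); rewrite Hc Fz rz eqxx mz.
Qed.

Lemma gpick_none r m : gpick r m = None ->
  forall z, z \in F -> rk z = r -> z \in m.
Proof.
rewrite /gpick; set c := [seq _ <- _ | _].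
have: forall z, (z \in c) = (z \in F) && ((rk z == r) && (z \notin m)).
  by move=> z; rewrite mem_filter andbC.
case E: c => [|x c'] // Hc _ z Fz rz.
apply: contraT => mz.
by have := Hc z; rewrite Fz rz eqxx mz.
Qed.

Definition winv (acc : seq nat) (x : nat) :=
  [/\ uniq acc, {subset acc <= F},
      forall r, count (fun y => rk y == r) acc + (nr x == r)
                = (r == 0) + count (fun y => nr y == r) acc &
      forall y z, y \in acc -> z \in F -> rk z = rk y -> y < z -> z \in acc].

Lemma size_sub (s : seq nat) : uniq s -> {subset s <= F} -> size s <= size F.
Proof. move=> u s_sub; exact: uniq_leq_size. Qed.

Lemma gwalk_end fuel x acc : winv acc x -> size acc + fuel = (size F).+1 ->
  exists x', winv (gwalk fuel x acc) x' /\ gpick (nr x') (gwalk fuel x acc) = None.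
Proof.
elim: fuel x acc => [|f IH] x acc [u sub tr gr] hs /=.
  have := size_sub u sub; lia.
case E: (gpick (nr x) acc) => [y|]; last by exists x.
have [Fy ry ny mx] := gpick_some E.
apply: IH; last by rewrite size_rcons; lia.
split.
- by rewrite rcons_uniq ny u.
- by move=> z; rewrite mem_rcons in_cons => /orP[/eqP->|/sub].
- move=> r; rewrite -!cats1 !count_cat /= ry; have := tr r; lia.
- move=> y' z; rewrite !mem_rcons !in_cons => /orP[/eqP->|ya] Fz rz lt.
    apply/orP; case: (boolP (z \in acc)) => za; first by right.
    by have := mx z Fz (etrans rz ry) za; rewrite leqNgt lt.
  by rewrite (gr y' z ya Fz rz lt) orbT.
Qed.

Lemma count_le (P : pred nat) s : uniq s -> {subset s <= F} -> count P s <= count P F.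
Proof.
move=> u sub; rewrite -!size_filter; apply: uniq_leq_size; first exact: filter_uniq.
by move=> z; rewrite !mem_filter => /andP[-> /sub].
Qed.

Lemma count_lt (P : pred nat) s z : uniq s -> {subset s <= F} ->
  z \in F -> z \notin s -> P z -> count P s < count P F.
Proof.
move=> u sub Fz zs Pz; rewrite -!size_filter.
have: size (z :: filter P s) <= size (filter P F).
  apply: uniq_leq_size; first by rewrite /= filter_uniq // mem_filter Pz zs.
  move=> y; rewrite in_cons mem_filter => /orP[/eqP->|/andP[Py /sub Fy]].
    by rewrite mem_filter Pz Fz.
  by rewrite mem_filter Py Fy.
by [].
Qed.

Lemma count_ge (P : pred nat) s : uniq F -> (forall z, z \in F -> P z -> z \in s) ->
  count P F <= count P s.
Proof.
move=> u sub; rewrite -!size_filter; apply: uniq_leq_size; first exact: filter_uniq.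
by move=> z; rewrite !mem_filter => /andP[Pz Fz]; rewrite Pz (sub z Fz Pz).
Qed.

Hypothesis uF : uniq F.
Hypothesis bal : forall r, count (fun y => rk y == r) F = count (fun y => nr y == r) F.
Hypothesis tree : forall x, x \in F -> 0 < rk x ->
  nr x = (rk x).-1 \/ exists2 y, y \in F & (y < x) && (rk y == rk x).

Lemma final_cover acc x : winv acc x -> gpick (nr x) acc = None -> size acc = size F.
Proof.
move=> [u sub tr gr] none.
have all_v := gpick_none none.
have v0 : nr x = 0.
  apply: contraTeq isT => nv.
  have h1 := tr (nr x); rewrite eqxx (negbTE nv) /= in h1.
  have h2 := count_ge (P:=fun y => rk y == nr x) uF (fun z Fz rz => all_v z Fz (eqP rz)).
  have h3 := count_le (fun y => nr y == nr x) u sub.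
  have h4 := bal (nr x); lia.
have trr r : count (fun y => rk y == r) acc = count (fun y => nr y == r) acc.
  have := tr r; rewrite v0; case: (eqVneq r 0) => [->|rn0]; first by lia.
  by move: rn0; case: r => // r _ /=; lia.
have allin : forall r z, z \in F -> rk z = r -> z \in acc.
  elim=> [|s IHs] z Fz rz; first exact: all_v z Fz (etrans rz (esym v0)).
  apply: contraT => za.
  have exP : exists y, (y \in F) && (rk y == s.+1) by exists z; rewrite Fz rz eqxx.
  case: (ex_minnP exP) => e /andP[Fe /eqP re] emin.
  have ea : e \notin acc.
    apply: contra za => ea; have : e <= z by apply: emin; rewrite Fz rz eqxx.
    rewrite leq_eqVlt => /orP[/eqP<-//|lt].
    by apply: gr ea Fz _ lt; rewrite rz re.
  have ne : nr e = s.
    case: (tree Fe); first by rewrite re.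
      by rewrite re.
    move=> [y Fy /andP[lt /eqP ry]].
    by have := emin y; rewrite Fy ry re eqxx leqNgt lt => /(_ isT).
  have h1 := count_lt (P := fun y => nr y == s) u sub Fe ea (introT eqP ne).
  have h2 := count_ge (P:=fun y => rk y == s) uF (fun z Fz rz => IHs z Fz (eqP rz)).
  have h3 := trr s; have h4 := bal s; lia.
apply/eqP; rewrite eqn_leq size_sub //=.
rewrite -(count_predT F) -(count_predT acc); apply: count_ge => // z Fz _.
exact: allin Fz erefl.
Qed.

Hypothesis start : exists2 x, x \in F & rk x == 0.

Definition gwalking :=
  match gpick 0 [::] with
  | None => [::]
  | Some x0 => gwalk (size F) x0 [:: x0]
  end.

Lemma gwalking_size : size gwalking = size F.
Proof.
rewrite /gwalking; case E: (gpick 0 [::]) => [x0|].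
  have [Fx rx _ mx] := gpick_some E.
  have wi0 : winv [:: x0] x0.
    split => //.
    - by move=> z; rewrite mem_seq1 => /eqP->.
    - by move=> r /=; rewrite rx eq_sym; case: (r == 0); case: (nr x0 == r).
    - move=> y z; rewrite mem_seq1 => /eqP-> Fz rz lt.
      by have := mx z Fz (etrans rz rx) isT; rewrite leqNgt lt.
  have [x' [wi none]] := @gwalk_end (size F) x0 [:: x0] wi0 erefl.
  exact: final_cover wi none.
case: start => x Fx /eqP rx.
by have := gpick_none E Fx rx.
Qed.

End AbsWalk.

Lemma walk_eq k cols f x acc :
  walk k cols f x acc = gwalk (flatten cols) (rankR cols) (next_rank k cols) f x acc.
Proof. by elim: f x acc => //= f IH x acc; rewrite /pick_box /gpick; case: filter => // *; rewrite IH. Qed.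

Lemma flat_facts (C : seq (seq nat)) : uniq (flatten C) ->
  (forall j, uniq (nth [::] C j)) /\
  (forall x j j', x \in nth [::] C j -> x \in nth [::] C j' -> j = j').
Proof.
elim: C => [|c C IH] /=; first by split=> [j|x j j']; rewrite nth_nil.
rewrite cat_uniq => /and3P[uc hc uC]; have [IH1 IH2] := IH uC.
have inF x j : x \in nth [::] C j -> x \in flatten C.
  move=> h; apply/flattenP; exists (nth [::] C j) => //.
  apply: mem_nth; case: (ltnP j (size C)) => // le; by rewrite nth_default in h.
have dis x j : x \in c -> x \in nth [::] C j -> False.
  move=> xc /inF xF; move/hasPn: hc => /(_ x xF); by rewrite xc.
split; first by case.
move=> x [|j] [|j'] //= h1 h2.
- by case: (dis _ _ h1 h2).
- by case: (dis _ _ h2 h1).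
- by rewrite (IH2 _ _ _ h1 h2).
Qed.

Lemma find_at (T : Type) (P : pred T) (s : seq T) j :
  j < size s -> (forall d, P (nth d s j)) -> (forall d j', j' < j -> ~~ P (nth d s j')) ->
  find P s = j.
Proof.
elim: s j => [|x s IH] [|j] //= lt h1 h2.
  by rewrite (h1 x).
have := h2 x 0 isT => /= /negbTE ->; congr _.+1; apply: IH => // d j' lt'.
exact: (h2 d j'.+1).
Qed.

Section Ranks.
Variables (k : seq nat) (C : seq (seq nat)).
Hypothesis HU : uniq (flatten C).
Hypothesis HS : forall j, j < size C -> size (nth [::] C j) = (nth 0 k j).+1.
Hypothesis HE : forall j, 0 < j < size C ->
  exists2 j', j' < j & (head 0 (nth [::] C j)).-1 \in nth [::] C j'.
Hypothesis HP : forall x, x \in flatten C -> 0 < x.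
Hypothesis Hne : 0 < size C.

Let colU := (flat_facts HU).1.
Let colD := (flat_facts HU).2.

Lemma mem_col x j : x \in nth [::] C j -> j < size C.
Proof. by case: (ltnP j (size C)) => // le; rewrite nth_default. Qed.

Lemma col_flat x j : x \in nth [::] C j -> x \in flatten C.
Proof. move=> h; apply/flattenP; exists (nth [::] C j) => //; exact/mem_nth/(mem_col h). Qed.

Lemma flat_col x : x \in flatten C -> exists2 j, j < size C & x \in nth [::] C j.
Proof.
move/flattenP=> [c cC xc]; have [j lt e] := nthP [::] cC; by exists j; rewrite ?e.
Qed.

Lemma colofE x j : x \in nth [::] C j -> colof C x = j.
Proof.
move=> h; have ltj := mem_col h; apply: find_at => //.
  by move=> d; rewrite (set_nth_default [::]).
move=> d j' lt; apply/negP; rewrite (set_nth_default [::]); last exact: ltn_trans lt ltj.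
by move=> h'; have := colD h' h => e; rewrite e ltnn in lt.
Qed.

Lemma rankf_stable y j m : y \in nth [::] C j -> j < m -> rankf C m y = rankf C j.+1 y.
Proof.
move=> h; elim: m => // m IH; rewrite ltnS leq_eqVlt => /orP[/eqP->//|lt].
rewrite /= ifN ?IH //; apply/negP => h'; have := colD h h' => e.
by rewrite e ltnn in lt.
Qed.

Definition base j := if j == 0 then 0 else rankf C j (head 0 (nth [::] C j)).-1.

Lemma rankE x j : x \in nth [::] C j -> rankR C x = base j + index x (nth [::] C j).
Proof.
move=> h; rewrite /rankR (rankf_stable h (mem_col h)) /= h //.
Qed.

Lemma nrE x j : x \in nth [::] C j -> next_rank k C x =
  if index x (nth [::] C j) == 0 then base j + nth 0 k j
  else base j + (index x (nth [::] C j)).-1.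
Proof.
move=> h; have ltj := mem_col h; have uc := colU j.
rewrite /next_rank (colofE h); case: eqP => [_|ne].
  have lt : nth 0 k j < size (nth [::] C j) by rewrite HS.
  by rewrite (rankE (mem_nth 0 lt)) index_uniq.
have lt : (index x (nth [::] C j)).-1 < size (nth [::] C j).
  by rewrite -index_mem in h; apply: leq_ltn_trans h; exact: leq_pred.
by rewrite (rankE (mem_nth 0 lt)) index_uniq.
Qed.

Lemma balance r : count (fun y => rankR C y == r) (flatten C) =
                  count (fun y => next_rank k C y == r) (flatten C).
Proof.
rewrite !count_flatten; congr sumn; apply/eq_in_map => c cC.
have [j ltj ec] := nthP [::] cC; rewrite -ec; have uc := colU j.
rewrite -(mkseq_nth 0 (nth [::] C j)) /mkseq !count_map HS //.
set K := nth 0 k j.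
have hr i : i < K.+1 -> rankR C (nth 0 (nth [::] C j) i) = base j + i.
  by move=> lt; rewrite -HS // in lt; rewrite (rankE (mem_nth 0 lt)) index_uniq.
have hn i : i < K.+1 -> next_rank k C (nth 0 (nth [::] C j) i) =
    if i == 0 then base j + K else base j + i.-1.
  by move=> lt; rewrite -HS // in lt; rewrite (nrE (mem_nth 0 lt)) index_uniq.
transitivity ((base j + K == r) + count (fun i => base j + i == r) (iota 0 K)).
  rewrite -addn1 iotaD count_cat /= add0n addn0 addnC hr ?addn1 //; congr (_ + _).
  apply: eq_in_count => i; rewrite mem_iota add0n /= => lt.
  by rewrite hr // ltnS ltnW.
have -> : iota 0 K.+1 = 0 :: map succn (iota 0 K).
  by rewrite /= -(iotaDl 1 0).
rewrite /= count_map hn //=; congr (_ + _).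
apply: eq_in_count => i; rewrite mem_iota add0n /= => lt.
by rewrite hn.
Qed.

Lemma tree x : x \in flatten C -> 0 < rankR C x ->
  next_rank k C x = (rankR C x).-1 \/
  exists2 y, y \in flatten C & (y < x) && (rankR C y == rankR C x).
Proof.
move=> /flat_col [j ltj h]; rewrite (nrE h) (rankE h) => bp.
case: eqP => [i0|ne]; last by left; lia.
right; rewrite i0 addn0 in bp *.
have j0 : j != 0 by apply: contraTneq bp => ->.
have hj : 0 < j < size C by rewrite lt0n j0 ltj.
have [j' lt' hy] := HE hj.
exists (head 0 (nth [::] C j)).-1; first exact: col_flat hy.
have xe : head 0 (nth [::] C j) = x by rewrite -nth0 -i0 nth_index.
rewrite xe in hy *.
have xp : 0 < x by apply: HP; exact: col_flat h.
rewrite prednK // leqnn /=.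
rewrite /rankR (rankf_stable hy (mem_col hy)) -(rankf_stable hy lt') /base (negbTE j0) xe.
by [].
Qed.

Lemma start : exists2 x, x \in flatten C & rankR C x == 0.
Proof.
have lt : 0 < size (nth [::] C 0) by rewrite HS.
exists (nth 0 (nth [::] C 0) 0); first exact: col_flat (mem_nth 0 lt).
by rewrite (rankE (mem_nth 0 lt)) index_uniq.
Qed.

Lemma walking_size : size (walking k C) = size (flatten C).
Proof.
have -> : walking k C = gwalking (flatten C) (rankR C) (next_rank k C).
  rewrite /walking /gwalking.
  change (pick_box C 0 [::]) with (gpick (flatten C) (rankR C) 0 [::]).
  by case: gpick => // x0; exact: walk_eq.
apply: gwalking_size => //; [exact: balance | exact: tree | exact: start].
Qed.

End Ranks.

Lemma size_set_nth_lt (T : Type) (s : seq T) j (v x0 : T) :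
  j < size s -> size (set_nth x0 s j v) = size s.
Proof. by move=> lt; rewrite size_set_nth; apply/maxn_idPr. Qed.

Lemma flat_set (cols : seq (seq nat)) j x : j < size cols ->
  perm_eq (flatten (set_nth [::] cols j (rcons (nth [::] cols j) x))) (rcons (flatten cols) x).
Proof.
elim: cols j => [|c cs IH] [|j] //= lt.
  by rewrite -!cats1 -catA; apply/permP => P; rewrite !count_cat; lia.
by rewrite rcons_cat perm_cat2l; apply: IH.
Qed.

Lemma foldl_mem (g : nat -> nat -> bool) j0 js :
  foldl (fun b j => if g b j then j else b) j0 js \in j0 :: js.
Proof.
elim: js j0 => [|j js IH] j0 /=; first by rewrite mem_seq1.
case: (g j0 j).
  by have := IH j; rewrite !in_cons => /orP[->|->]; rewrite ?orbT.
by have := IH j0; rewrite !in_cons => /orP[->|->]; rewrite ?orbT.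
Qed.

Lemma sum_Posz (s : seq nat) : (\sum_(x <- map Posz s) x)%R = Posz (sumn s).
Proof. by elim: s => [|x s IH]; rewrite ?big_nil // big_cons IH /= PoszD. Qed.

Lemma sum_split (s : seq int) : all (fun x : int => (0 < x)%R || (x == (-1)%R)) s ->
  (\sum_(x <- s) x)%R = (\sum_(x <- [seq x <- s | (0 < x)%R]) x - Posz (count (fun x : int => ~~ (0 < x)%R) s))%R.
Proof.
elim: s => [|x s IH] /=; first by rewrite !big_nil.
move=> /andP[hx hs]; rewrite big_cons IH //.
case: (boolP (0 < x)%R) => px /=.
  by rewrite big_cons GRing.addrA.
by move: hx; rewrite (negbTE px) /= => /eqP ->; rewrite add1n -addn1 PoszD; lia.
Qed.

Lemma flat_col' (C : seq (seq nat)) x : x \in flatten C -> exists2 j, j < size C & x \in nth [::] C j.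
Proof.
move/flattenP=> [c cC xc]; have [j lt e] := nthP [::] cC; by exists j; rewrite ?e.
Qed.

Lemma head_rcons_ne (c : seq nat) x : c != [::] -> head 0 (rcons c x) = head 0 c.
Proof. by case: c. Qed.

Lemma mem_set_mono (cols : seq (seq nat)) j x y j' :
  y \in nth [::] cols j' -> y \in nth [::] (set_nth [::] cols j (rcons (nth [::] cols j) x)) j'.
Proof.
rewrite nth_set_nth /=; case: eqP => [->|] //.
by rewrite mem_rcons in_cons => ->; rewrite orbT.
Qed.

Lemma iota_rc m i : iota m i.+1 = rcons (iota m i) (m + i).
Proof. by have := iotaD m i 1; rewrite addn1 => ->; rewrite cats1. Qed.

Lemma iotaS1 i : iota 1 i.+1 = rcons (iota 1 i) i.+1.
Proof. by rewrite iota_rc add1n. Qed.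

Lemma flat_set_iota (cols : seq (seq nat)) j i : j < size cols ->
  perm_eq (flatten cols) (iota 1 i) ->
  perm_eq (flatten (set_nth [::] cols j (rcons (nth [::] cols j) i.+1))) (iota 1 i.+1).
Proof.
move=> lt hp; apply: perm_trans (flat_set _ lt) _.
by rewrite iotaS1 -!cats1 perm_cat2r.
Qed.

Definition ipos (x : int) : bool := (0 < x)%R.

Section Fill.
Variables (k : seq nat) (a : seq int).
Hypothesis Hn : 0 < size k.
Hypothesis HN : size a = size k + sumn k.
Hypothesis HD : in_Dk k a.

Local Notation n := (size k).
Local Notation N := (size a).

Let HF : filter ipos a = map Posz k. Proof. by case: HD. Qed.
Let Hall : all (fun x : int => (0 < x)%R || (x == (-1)%R)) a. Proof. by case: HD. Qed.
Let Hpart : forall i, i < N -> (0 <= \sum_(j < i) a`_j)%R. Proof. by case: HD. Qed.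

Definition cnt i := count ipos (take i a).

Lemma at_or t : t < N -> (0 < (nth 0%R a t))%R || ((nth 0%R a t) == (-1)%R).
Proof. by move=> lt; apply: (all_nthP 0%R Hall). Qed.

Lemma total : (\sum_(t < N) (nth 0%R a t))%R = 0%R.
Proof.
rewrite -(big_mkord xpredT (fun t => nth 0%R a t)).
have := big_nth 0%R (r := a) xpredT (fun x : int => x) (op := +%R) (idx := 0%R).
move=> <-; rewrite sum_split //.
have e1 : [seq x <- a | (0 < x)%R] = map Posz k by exact: HF.
rewrite e1 sum_Posz.
have := count_predC ipos a.
have -> : count ipos a = n by rewrite -size_filter HF size_map.
rewrite HN => h.
have -> : count (fun x : int => ~~ (0 < x)%R) a = sumn k.
  by apply/eqP; rewrite -(eqn_add2l n); apply/eqP; exact: h.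
by rewrite GRing.subrr.
Qed.

Lemma cnt_S t : t < N -> cnt t.+1 = cnt t + ipos (nth 0%R a t).
Proof. by move=> lt; rewrite /cnt (take_nth 0%R lt) -cats1 count_cat /= addn0. Qed.

Lemma cnt0 : cnt 0 = 0.
Proof. by rewrite /cnt take0. Qed.

Lemma at_pos t : t < N -> (0 < (nth 0%R a t))%R -> (nth 0%R a t) = Posz (nth 0 k (cnt t)) /\ cnt t < n.
Proof.
move=> lt pt.
have e : filter ipos a = filter ipos (take t a) ++ (nth 0%R a t) :: filter ipos (drop t.+1 a).
  by rewrite -{1}(cat_take_drop t a) (drop_nth 0%R lt) filter_cat /= /ipos pt.
have sz : size (filter ipos (take t a)) = cnt t by rewrite size_filter.
have ltn : cnt t < n.
  have := congr1 size e; rewrite HF size_map size_cat /= sz => ->; lia.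
split => //.
have := congr1 (fun s => nth 0%R s (cnt t)) e; rewrite /= HF nth_cat sz ltnn subnn /=.
by rewrite (nth_map 0) // => <-.
Qed.

Definition rterm (cols : seq (seq nat)) j :=
  if nth [::] cols j == [::] then 0 else colcap k j - size (nth [::] cols j).
Definition Rem (cols : seq (seq nat)) := \sum_(j < n) rterm cols j.

Lemma Rem_set cols j x : j < n ->
  Rem (set_nth [::] cols j (rcons (nth [::] cols j) x)) + rterm cols j =
  Rem cols + rterm (set_nth [::] cols j (rcons (nth [::] cols j) x)) j.
Proof.
move=> lt; rewrite /Rem (bigD1 (Ordinal lt)) //= [in RHS](bigD1 (Ordinal lt)) //=.
rewrite (eq_bigr (fun j' : 'I_n => rterm cols j')); first lia.
move=> j' ne; rewrite /rterm nth_set_nth /=.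
have -> : (nat_of_ord j' == j) = false.
  by apply/negbTE; apply: contra ne => /eqP e; apply/eqP/val_inj.
by [].
Qed.

Lemma Rem_pos cols : 0 < Rem cols -> exists2 j, j < n & 0 < rterm cols j.
Proof.
case: (boolP [exists j : 'I_n, 0 < rterm cols j]) => [/existsP[j h] _|].
  by exists j.
move=> /existsPn h; rewrite /Rem big1 // => j _.
by have := h j; rewrite lt0n negbK => /eqP.
Qed.

Definition Inv i (cols : seq (seq nat)) :=
  [/\ size cols = n,
      forall j, j < n -> (nth [::] cols j == [::]) = (cnt i <= j),
      perm_eq (flatten cols) (iota 1 i),
      forall j, j < n -> size (nth [::] cols j) <= colcap k j &
      forall j, 0 < j < n -> nth [::] cols j != [::] ->
        exists2 j', j' < j & (head 0 (nth [::] cols j)).-1 \in nth [::] cols j']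
  /\ Posz (Rem cols) = (\sum_(t < i) (nth 0%R a t))%R.


Lemma Inv_upd i cols j x :
  x = i.+1 -> j < n -> Inv i cols ->
  let cols' := set_nth [::] cols j (rcons (nth [::] cols j) x) in
  [/\ size cols' = n, perm_eq (flatten cols') (iota 1 i.+1) &
      forall j', nth [::] cols' j' = if j' == j then rcons (nth [::] cols j) x else nth [::] cols j'].
Proof.
move=> -> lt [[Hs Hb Hp Hd He] Hf] cols'; split.
- by rewrite size_set_nth_lt ?Hs.
- by apply: flat_set_iota; rewrite ?Hs.
- by move=> j'; rewrite nth_set_nth.
Qed.

Lemma He_upd i cols j x :
  j < n -> Inv i cols ->
  let cols' := set_nth [::] cols j (rcons (nth [::] cols j) x) in
  forall j', 0 < j' < n -> j' != j -> nth [::] cols' j' != [::] ->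
    exists2 j'', j'' < j' & (head 0 (nth [::] cols' j')).-1 \in nth [::] cols' j''.
Proof.
move=> lt [[Hs Hb Hp Hd He] Hf] cols' j' hj' ne.
rewrite /cols' nth_set_nth /= (negbTE ne) => nz.
have [j'' l1 l2] := He j' hj' nz; exists j'' => //; exact: mem_set_mono.
Qed.

Lemma step i cols : i < N -> Inv i cols -> Inv i.+1 (fill_step k a cols i.+1).
Proof.
move=> iN HI; have [[Hs Hb Hp Hd He] Hf] := HI.
have sumS : (\sum_(t < i.+1) (nth 0%R a t))%R = (\sum_(t < i) (nth 0%R a t) + nth 0%R a i)%R.
  by rewrite big_ord_recr.
rewrite /fill_step /letterW /=; case: ifP => hw.
-
  have ai : nth 0%R a i = (-1)%R by apply/eqP.
  have cntS : cnt i.+1 = cnt i by rewrite cnt_S // /ipos ai addn0.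
  have R1 : 0 < Rem cols.
    case: (ltnP i.+1 N) => h.
      have := Hpart h; rewrite sumS -Hf ai; lia.
    have e : i.+1 = N by apply/eqP; rewrite eqn_leq iN h.
    have := total; rewrite -e sumS -Hf ai; lia.
  have [j ltj rj] := Rem_pos R1.
  have nej : nth [::] cols j != [::] by move: rj; rewrite /rterm; case: eqP.
  have act : is_active k cols j.
    rewrite /is_active lt0n size_eq0 nej /=; move: rj; rewrite /rterm (negbTE nej).
    by rewrite subn_gt0 => h; rewrite neq_ltn h.
  rewrite /place_W.
  have jin : j \in [seq j <- iota 0 n | is_active k cols j] by rewrite mem_filter act mem_iota.
  case E: [seq j <- iota 0 n | is_active k cols j] => [|j0 js]; first by rewrite E in jin.
  rewrite /=.
  set j1 := foldl _ j0 js.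
  have : j1 \in j0 :: js by apply: foldl_mem.
  rewrite -E mem_filter mem_iota add0n => /andP[act1 /andP[_ lt1]].
  move: act1; rewrite /is_active => /andP[sz1 ncap].
  have ne1 : nth [::] cols j1 != [::] by rewrite -size_eq0 -lt0n.
  have szlt : size (nth [::] cols j1) < colcap k j1 by rewrite ltn_neqAle ncap Hd.
  have [S1 S2 S3] := Inv_upd (erefl i.+1) lt1 HI.
  split; first split => //.
  + move=> j' lt'; rewrite S3 cntS; case: (eqVneq j' j1) => [->|ne]; last exact: Hb.
    rewrite -(Hb j1 lt1) (negbTE ne1); by case: (nth [::] cols j1).
  + move=> j' lt'; rewrite S3; case: (eqVneq j' j1) => [->|ne]; last exact: Hd.
    by rewrite size_rcons.
  + move=> j' hj'; case: (eqVneq j' j1) => [e|ne]; last exact: (He_upd (x:=i.+1) lt1 HI hj' ne).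
    rewrite e in hj' *; rewrite S3 eqxx head_rcons_ne // => _.
    have [j'' l1 l2] := He j1 hj' ne1.
    by exists j'' => //; apply: mem_set_mono.
  + have := Rem_set cols i.+1 lt1.
    rewrite /rterm S3 eqxx (negbTE ne1) /= size_rcons => h.
    have rn : (rcons (nth [::] cols j1) i.+1 == [::]) = false by case: (nth [::] cols j1).
    rewrite rn in h; rewrite sumS -Hf ai; rewrite /colcap in szlt h; lia.
- have pa : (0 < nth 0%R a i)%R by have := at_or iN; rewrite hw orbF.
  have [ak ltp] := at_pos iN pa.
  set p := cnt i in ak ltp.
  have cntS : cnt i.+1 = p.+1 by rewrite cnt_S // /ipos pa addn1.
  have ep : nth [::] cols p = [::] by apply/eqP; rewrite Hb // leqnn.
  rewrite /place_S.
  have fp : find (fun c => c == [::]) cols = p.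
    apply: find_at; first by rewrite Hs.
      by move=> d; rewrite (set_nth_default [::]) ?Hs // ep.
    move=> d j' lt; rewrite (set_nth_default [::]) ?Hs; last by lia.
    by rewrite Hb; [rewrite -ltnNge | lia].
  rewrite fp Hs ltp.
  have -> : [:: i.+1] = rcons (nth [::] cols p) i.+1 by rewrite ep.
  have [S1 S2 S3] := Inv_upd (erefl i.+1) ltp HI.
  split; first split => //.
  + move=> j' lt'; rewrite S3 cntS; case: (eqVneq j' p) => [->|ne].
      by rewrite ep /= ltnn.
    by rewrite Hb // ltn_neqAle eq_sym ne.
  + move=> j' lt'; rewrite S3; case: (eqVneq j' p) => [->|ne]; last exact: Hd.
    by rewrite ep /colcap.
  + move=> j' hj'; case: (eqVneq j' p) => [e|ne]; last exact: (He_upd (x:=i.+1) ltp HI hj' ne).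
    rewrite e in hj' *; rewrite S3 eqxx ep /= => _.
    have pi : p <= i by rewrite /p /cnt; apply: leq_trans (count_size _ _) _; rewrite size_take_min geq_minl.
    have : i \in flatten cols by rewrite (perm_mem Hp) mem_iota; lia.
    move=> /flat_col' [j'' l1 l2]; exists j''.
      have nz : nth [::] cols j'' != [::] by apply/eqP => e0; rewrite e0 in l2.
      by move: nz; rewrite Hb -?Hs // -ltnNge.
    rewrite nth_set_nth /= ifN ?l2 //; apply/eqP => e0; by rewrite e0 ep in l2.
  + have := Rem_set cols i.+1 ltp.
    have rn : (rcons (nth [::] cols p) i.+1 == [::]) = false by case: (nth [::] cols p).
    rewrite /rterm S3 eqxx rn ep /= => h.
    rewrite sumS -Hf ak /colcap in h *; lia.
Qed.


Lemma fold_inv m i cols : Inv i cols -> i + m <= N ->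
  Inv (i + m) (foldl (fill_step k a) cols (iota i.+1 m)).
Proof.
elim: m i cols => [|m IH] i cols HI le; first by rewrite addn0.
rewrite /= -addSnnS; apply: IH; last by rewrite addSnnS.
by apply: step => //; lia.
Qed.

Hypothesis Hk : all (fun kj => 0 < kj) k.

Lemma Inv0 : Inv 0 (nseq n [::]).
Proof.
have nthc j : nth [::] (nseq n [::]) j = [::] :> seq nat by rewrite nth_nseq; case: ifP.
split; first split.
- by rewrite size_nseq.
- by move=> j lt; rewrite nthc cnt0.
- by rewrite (_ : flatten _ = [::]) //; elim: (size k) => //= m ->.
- by move=> j lt; rewrite nthc.
- by move=> j lt; rewrite nthc.
rewrite big_ord0 /Rem big1 // => j _; by rewrite /rterm nthc.
Qed.

Lemma fillT_inv : Inv N (fillT k a).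
Proof.
have N2 : 1 < N.
  rewrite HN; case: (k) Hn Hk => //= k0 ks _ /andP[k0p _]; lia.
have a0 : (0 < nth 0%R a 0)%R.
  have := at_or (ltnW N2); have := Hpart N2; rewrite big_ord1.
  by case: (0 < _)%R => //= h /eqP e; rewrite e in h.
have -> : fillT k a = foldl (fill_step k a) (nseq n [::]) (iota 1 N).
  rewrite /fillT; case E: N N2 => [|N'] //= _.
  congr foldl.
  rewrite /fill_step /letterW /= ifN; last by apply/negP => /eqP e; rewrite e in a0.
  rewrite /place_S; case: (k) Hn => //= k0 ks _.
have := fold_inv (m := N) Inv0; rewrite add0n; apply; exact: leqnn.
Qed.

End Fill.

Unset Implicit Arguments.

Theorem mainTheorem7 (k : seq nat) (a : seq int) :
  1 <= size k ->
  all (fun kj => 0 < kj) k ->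
  size a = size k + sumn k ->
  in_Dk k a ->
  size (sigmaD k a) = size k + sumn k.
Proof.
move=> Hn Hk HN HD.
have [[Hs Hb Hp Hd He] Hf] := fillT_inv Hn HN HD Hk.
have cN : cnt a (size a) = size k.
  by rewrite /cnt take_size -size_filter; case: HD => -> _ _; rewrite size_map.
have nz j : j < size k -> nth [::] (fillT k a) j != [::].
  by move=> lt; rewrite Hb // cN -ltnNge.
have R0 : Rem k (fillT k a) = 0.
  by apply/eqP; rewrite -(eqz_nat) Hf (total HN HD).
have HS j : j < size (fillT k a) -> size (nth [::] (fillT k a) j) = (nth 0 k j).+1.
  rewrite Hs => lt; apply/eqP; rewrite eqn_leq Hd //=.
  move/eqP: R0; rewrite /Rem sum_nat_eq0 => /forallP /(_ (Ordinal lt)) /implyP /(_ isT).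
  by rewrite /rterm (negbTE (nz j lt)) /colcap subn_eq0.
rewrite /sigmaD walking_size //.
- by rewrite (perm_size Hp) size_iota.
- by rewrite (perm_uniq Hp) iota_uniq.
- by move=> j; rewrite Hs => hj; apply: He => //; apply: nz; case/andP: hj.
- by move=> x; rewrite (perm_mem Hp) mem_iota => /andP[].
- by rewrite Hs.
Qed.
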